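(* Let $\mathcal{N}$ be a Beeping Network with $n$ nodes and maximum degree $\Delta$, with unique IDs from $[1,n^c]$ for a constant $c\ge1$, where each node knows $n$, $c$, $\Delta$, $h$ and an upper bound $B$ on the size in bits of each input message. There is a deterministic distributed algorithm solving the $B$-bit $h$-hop simulation problem on $\mathcal{N}$ in $O(h\cdot B\Delta^{h+2}\,\mathrm{polylog}\, n)$ rounds.
   Context: A Beeping Network is a network of $n$ nodes whose topology is an undirected graph $G=(V,E)$. Time is divided into synchronous rounds and all nodes start simultaneously. In each round every node either beeps or listens; a listening node hears ''silence'' if no neighbor beeps and ''noise'' if at least one neighbor beeps, and cannot distinguish one beep from several. $B$-bit $h$-hop simulation: each node holds messages (possibly different for different destinations) of at most $B$ bits addressed to other nodes, and must deliver each such message to its destination whenever the destination is within distance $h$ (hops) of the source; messages to nodes at distance more than $h$ need not be delivered. $\mathrm{polylog}\, n$ denotes a fixed polylogarithmic function of $n$. *)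

(* Defs.v *)
From mathcomp Require Import all_boot.
Set Implicit Arguments. Unset Strict Implicit. Unset Printing Implicit Defensive.

Definition msg := seq bool.

(* Input of a node: for each destination ID, possibly a message addressed
   to it (None = no message for that destination). *)
Definition input := nat -> option msg.

(* Output of a node: for each source ID, the message it learned from that
   source (None = no message). *)
Definition output := nat -> option msg.

Record params := Params { p_n : nat; p_c : nat; p_Delta : nat; p_h : nat; p_B : nat }.

(* In every round a node
   decides whether to beep from the known parameters, its ID, its input and
   the history of what it heard in the previous rounds. *)
Record algorithm := Algorithm {
  rounds : params -> nat;
  act    : params -> nat -> input -> seq bool -> bool;  (* true = beep *)
  out    : params -> nat -> input -> seq bool -> output }.

Section Execution.
Variables (n : nat) (e : rel 'I_n) (A : algorithm) (P : params)
          (id : 'I_n -> nat) (inp : 'I_n -> input).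

(* hist r v = what node v heard in rounds 0 .. r-1 (true = noise).  A node
   that beeps does not listen (records false); a listening node hears noise
   iff at least one neighbour beeps. *)
Fixpoint hist (r : nat) (v : 'I_n) : seq bool :=
  match r with
  | 0 => [::]
  | r'.+1 =>
      let beeps w := act A P (id w) (inp w) (hist r' w) in
      rcons (hist r' v) (~~ beeps v && [exists w, e v w && beeps w])
  end.

Definition final_output (v : 'I_n) : output :=
  out A P (id v) (inp v) (hist (rounds A P) v).
End Execution.

Definition simple_graph (n : nat) (e : rel 'I_n) :=
  symmetric e /\ irreflexive e.

Definition degree (n : nat) (e : rel 'I_n) (v : 'I_n) := #|[set w | e v w]|.

Definition max_degree (n : nat) (e : rel 'I_n) := \max_(v : 'I_n) degree e v.

Definition within_dist (n : nat) (e : rel 'I_n) (h : nat) (u v : 'I_n) :=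
  exists p : seq 'I_n, [/\ path e u p, last u p = v & size p <= h].

(* log2 n (floor); polylog n is rendered as (log2 n + 1)^k. *)
Definition log2 (n : nat) := trunc_log 2 n.

(* Main.v *)
Require Import Defs.
From mathcomp Require Import all_boot.
From mathcomp Require Import zify.
From Stdlib Require Import ClassicalEpsilon.
Set Implicit Arguments. Unset Strict Implicit. Unset Printing Implicit Defensive.

Module SelFam.
From mathcomp Require Import all_order all_algebra.
From mathcomp Require Import finfield.
Import GRing.Theory.

Definition qf (D W : nat) := 2 ^ (trunc_log 2 (D * W)).+1.

Lemma Poly_tuple_inj (F : fieldType) W (s1 s2 : W.-tuple F) : Poly s1 = Poly s2 -> s1 = s2.
Proof.
move=> E; apply: val_inj; apply: (@eq_from_nth _ 0%R); first by rewrite !size_tuple.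
move=> i _; have := congr1 (fun p : {poly F} => (p`_i)%R) E; by rewrite !coef_Poly.
Qed.

Lemma selfam D W : exists memb : nat -> nat -> bool, forall x Y, x < 2^W ->
  all (fun y => y < 2^W) Y -> size Y <= D -> x \notin Y ->
  exists2 j, j < qf D W ^ 2 & memb j x && all (fun y => ~~ memb j y) Y.
Proof.
pose k := (trunc_log 2 (D*W)).+1.
have [F _ cardF] := pPrimePowerField (isT : prime 2) (isT : 0 < k).
pose code x := nth [tuple of nseq W (0:F)%R] (enum {: W.-tuple F}) x.
pose px x : {poly F} := Poly (code x).
pose slots := enum {: F * F}.
exists (fun j x => let ab := nth (0,0)%R slots j in (px x).[ab.1] == ab.2)%R.
move=> x Y xlt Ylt YD xY.
have szE : size (enum {: W.-tuple F}) = (2^k)^W by rewrite -cardE card_tuple cardF.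
have big2 : 2^W <= (2^k)^W by rewrite -expnM leq_exp2l // leq_pmull.
have codeinj y : y < 2^W -> y != x -> px y != px x.
  move=> ylt yx; apply/negP=> /eqP /Poly_tuple_inj E.
  have : y = x.
    have ylt' : y < size (enum {: W.-tuple F}) by rewrite szE; exact: leq_trans ylt big2.
    have xlt' : x < size (enum {: W.-tuple F}) by rewrite szE; exact: leq_trans xlt big2.
    by apply/eqP; rewrite -(nth_uniq [tuple of nseq W (0:F)%R] ylt' xlt' (enum_uniq _)); apply/eqP.
  by move=> yx'; rewrite yx' eqxx in yx.
have cardbad : forall Y', all (fun y => y < 2^W) Y' -> x \notin Y' ->
    #|[set a : F | has (fun y => (px x).[a] == (px y).[a])%R Y']| <= size Y' * W.-1.
  elim=> [|y Y' IH] /= Ylt' xY'.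
    by rewrite (eq_card0 (A := [set a : F | false])) // => a; rewrite inE.
  move/andP: Ylt' => [ylt Ylt']; rewrite in_cons negb_or in xY'; move/andP: xY' => [xy xY'].
  pose r := (px x - px y)%R.
  have nz : r != 0%R by rewrite subr_eq0 eq_sym codeinj // eq_sym.
  pose R := [set a : F | root r a].
  have cR : #|R| <= W.-1.
    have H := max_poly_roots nz (_ : all (root r) (enum R)) (enum_uniq R).
    rewrite cardE; rewrite -ltnS; apply: leq_trans (H _) _.
      by apply/allP=> a; rewrite mem_enum inE.
    apply: leq_trans (leqSpred _).
    rewrite (leq_trans (size_polyD _ _)) // geq_max size_polyN.
    by rewrite !(leq_trans (size_Poly _)) // size_tuple.
  apply: leq_trans (_ : #|R :|: [set a : F | has (fun y => (px x).[a] == (px y).[a])%R Y']| <= _).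
    apply: subset_leq_card; apply/subsetP=> a; rewrite !inE /= => /orP [E|->]; last by rewrite orbT.
    by rewrite /root /r hornerD hornerN subr_eq0 E.
  rewrite mulSn; apply: leq_trans (leq_card_setU _ _) _.
  by rewrite leq_add // IH.
have cb := cardbad Y Ylt xY.
have : 0 < #|~: [set a : F | has (fun y => (px x).[a] == (px y).[a])%R Y]|.
  rewrite cardsCs setCK cardF subn_gt0; apply: leq_ltn_trans cb _.
  apply: leq_ltn_trans (_ : D * W < _); last exact: trunc_log_ltn.
  by rewrite leq_mul // leq_pred.
case/card_gt0P=> a; rewrite !inE => /hasPn Ha.
have ain : (a, (px x).[a])%R \in slots by rewrite mem_enum.
exists (index (a, (px x).[a])%R slots).
  rewrite -index_mem in ain; apply: (leq_trans ain); rewrite -cardE card_prod cardF /qf -/k; by rewrite mulnn.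
rewrite nth_index //= eqxx /=; apply/allP=> y yY; apply/negP=> /eqP E.
by have := Ha y yY; rewrite E eqxx.
Qed.

End SelFam.
Import SelFam.

Fixpoint bits (W a : nat) : seq bool :=
  if W is W'.+1 then odd a :: bits W' a./2 else [::].
Fixpoint unbits (s : seq bool) : nat :=
  if s is b :: s' then b + (unbits s').*2 else 0.

Lemma size_bits W a : size (bits W a) = W.
Proof. by elim: W a => //= W IH a; rewrite IH. Qed.

Lemma bitsK W a : a < 2 ^ W -> unbits (bits W a) = a.
Proof.
elim: W a => [|W IH] a /=; first by rewrite expn0 ltnS leqn0 => /eqP.
move=> lt; rewrite IH ?odd_double_half //.
by rewrite -ltn_double -!muln2 -expnSr; apply: leq_ltn_trans lt; rewrite muln2 -{2}(odd_double_half a) leq_addl.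
Qed.

Definition encMsg (B : nat) (m : seq bool) :=
  mkseq (fun i => i < size m) B ++ mkseq (fun i => nth false m i) B.
Definition decMsg (B : nat) (s : seq bool) :=
  take (count id (take B s)) (drop B s).

Lemma size_encMsg B m : size (encMsg B m) = B + B.
Proof. by rewrite size_cat !size_mkseq. Qed.

Lemma encMsgK B m : size m <= B -> decMsg B (encMsg B m) = m.
Proof.
move=> sm; rewrite /decMsg /encMsg take_size_cat ?size_mkseq // drop_size_cat ?size_mkseq //.
have -> : count id (mkseq (fun i => i < size m) B) = size m.
  rewrite /mkseq count_map -(subnKC sm) iotaD count_cat add0n.
  rewrite (eq_in_count (a2 := predT)) ?count_predT ?size_iota; last first.
    by move=> i; rewrite mem_iota add0n => /andP [_ H]; rewrite /= H.
  rewrite (eq_in_count (a2 := pred0)) ?count_pred0 ?addn0 //.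
  by move=> i; rewrite mem_iota => /andP [H _] /=; rewrite ltnNge H.
apply: (@eq_from_nth _ false); first by rewrite size_takel // size_mkseq.
move=> i; rewrite size_takel ?size_mkseq // => Hi.
by rewrite nth_take // nth_mkseq //; exact: leq_trans Hi sm.
Qed.

Definition item := (nat * nat * seq bool)%type.

Definition encItem (W B : nat) (it : item) : seq bool :=
  bits W it.1.1 ++ bits W it.1.2 ++ encMsg B it.2.
Definition decItem (W B : nat) (s : seq bool) : item :=
  (unbits (take W s), unbits (take W (drop W s)), decMsg B (drop (W + W) s)).

Lemma size_encItem W B it : size (encItem W B it) = 2 * W + 2 * B.
Proof. rewrite /encItem size_cat size_bits size_cat size_bits size_encMsg. by rewrite addnA !mul2n !addnn. Qed.

Definition wfi W B (it : item) := [&& it.1.1 < 2 ^ W, it.1.2 < 2 ^ W & size it.2 <= B].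

Lemma encItemK W B it : wfi W B it -> decItem W B (encItem W B it) = it.
Proof.
case: it => [[a b] m] /and3P [ha hb hm]; rewrite /decItem /encItem /=.
rewrite take_size_cat ?size_bits // bitsK //.
rewrite drop_size_cat ?size_bits // take_size_cat ?size_bits // bitsK //.
by rewrite -drop_drop drop_size_cat ?size_bits // drop_size_cat ?size_bits // encMsgK.
Qed.

Fixpoint encList (K wd : nat) (xs : seq (seq bool)) : seq bool :=
  if K is K'.+1 then
    match xs with
    | [::] => false :: nseq wd false ++ encList K' wd [::]
    | x :: xs' => true :: take wd (x ++ nseq wd false) ++ encList K' wd xs'
    end
  else [::].
Fixpoint decList (K wd : nat) (s : seq bool) : seq (seq bool) :=
  if K is K'.+1 then
    (if head false s then [:: take wd (behead s)] else [::]) ++ decList K' wd (drop wd.+1 s)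
  else [::].

Lemma size_pad wd x : size (take wd (x ++ nseq wd false)) = wd.
Proof. by rewrite size_takel // size_cat size_nseq leq_addl. Qed.

Lemma size_encList K wd xs : size (encList K wd xs) = K * wd.+1.
Proof.
elim: K xs => //= K IH [|x xs] /=; rewrite size_cat IH ?size_nseq ?size_pad //.
Qed.

Lemma encList_nil K wd : decList K wd (encList K wd [::]) = [::].
Proof.
elim: K => //= K IH; by rewrite drop_cat size_nseq ltnn subnn drop0.
Qed.

Lemma encListK K wd xs : size xs <= K -> all (fun x => size x == wd) xs ->
  decList K wd (encList K wd xs) = xs.
Proof.
elim: K xs => [|K IH] [|x xs] //=; first by move=> _ _; have := encList_nil K.+1 wd.
rewrite ltnS => sx /andP [/eqP hx ax].
rewrite take_cat size_pad ltnn subnn take0 cats0.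
rewrite -hx take_size_cat //=; idtac.
by rewrite drop_size_cat // hx IH.
Qed.

Definition man (s : seq bool) (pos : nat) :=
  if odd pos then ~~ nth false s pos./2 else nth false s pos./2.

Definition demanch (L : nat) (g : seq bool) : option (seq bool) :=
  if all (fun i => nth false g i.*2 != nth false g i.*2.+1) (iota 0 L)
  then Some (mkseq (fun i => nth false g i.*2) L) else None.

Lemma man_even s i : man s i.*2 = nth false s i.
Proof. by rewrite /man odd_double doubleK. Qed.
Lemma man_odd s i : man s i.*2.+1 = ~~ nth false s i.
Proof. by rewrite /man /= odd_double /= uphalf_double. Qed.

Section Dec.
Variables (T : finType) (tr : pred T) (M : T -> seq bool) (L : nat) (g : seq bool).
Hypothesis HM : forall w, tr w -> size (M w) = L.
Hypothesis Hg : forall i, i < L.*2 -> nth false g i = [exists w, tr w && man (M w) i].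

Lemma dec_sound s : 0 < L -> demanch L g = Some s -> exists2 w, tr w & M w = s.
Proof.
move=> L0; rewrite /demanch; case: ifP => // /allP Hall [<-].
have Hi i : i < L -> nth false g i.*2 != nth false g i.*2.+1.
  by move=> iL; apply: Hall; rewrite mem_iota add0n iL.
have : [exists w, tr w && man (M w) 0] || [exists w, tr w && man (M w) 1].
  have h0 : 0 < L.*2 by rewrite -muln2; lia.
  have h1 : 1 < L.*2 by rewrite -muln2; lia.
  have := Hi 0 L0; rewrite /= (Hg h0) (Hg h1).
  by case: [exists w, _]; case: [exists w, _].
have key : forall w0, tr w0 -> M w0 = mkseq (fun i => nth false g i.*2) L.
  move=> w0 t0; apply: (@eq_from_nth _ false); first by rewrite size_mkseq HM.
  move=> i; rewrite HM // => iL; rewrite nth_mkseq // Hg ?ltn_double //.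
  case E: (nth false (M w0) i).
    by apply/esym/existsP; exists w0; rewrite t0 man_even E.
  have := Hi i iL; rewrite !Hg ?ltn_double ?ltn_Sdouble //.
  have -> : [exists w, tr w && man (M w) i.*2.+1] by apply/existsP; exists w0; rewrite t0 man_odd E.
  by case: [exists w, _].
by case/orP=> /existsP [w0 /andP [t0 _]]; exists w0 => //; apply: key.
Qed.

Lemma dec_complete w0 : tr w0 -> (forall w, tr w -> w = w0) -> demanch L g = Some (M w0).
Proof.
move=> t0 uniq0.
have Hb i : i < L.*2 -> nth false g i = man (M w0) i.
  move=> iL; rewrite Hg //; apply/existsP/idP => [[w /andP [tw]]|H]; first by rewrite (uniq0 _ tw).
  by exists w0; rewrite t0.
rewrite /demanch; have -> : all (fun i => nth false g i.*2 != nth false g i.*2.+1) (iota 0 L).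
  apply/allP=> i; rewrite mem_iota add0n => /= iL.
  by rewrite !Hb ?ltn_double ?ltn_Sdouble // man_even man_odd; case: (nth _ _ _).
congr Some; apply: (@eq_from_nth _ false); first by rewrite size_mkseq HM.
by move=> i; rewrite size_mkseq => iL; rewrite nth_mkseq // Hb ?ltn_double // man_even.
Qed.
End Dec.

Section Balls.
Variables (n : nat) (e : rel 'I_n).

Fixpoint ballA (r : nat) (w : 'I_n) : {set 'I_n} :=
  if r is r'.+1 then ballA r' w :|: \bigcup_(x | e w x) ballA r' x else [set w].

Lemma ballA_mono r w : ballA r w \subset ballA r.+1 w.
Proof. exact: subsetUl. Qed.

Lemma ballA_monoS r s w : r <= s -> ballA r w \subset ballA s w.
Proof.
move=> /subnK <-; elim: (s - r) => //= k IH.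
by apply: subset_trans IH (ballA_mono _ _).
Qed.

Lemma ballA_self r w : w \in ballA r w.
Proof.
elim: r => [|r IH] /=; first by rewrite inE.
by rewrite inE IH.
Qed.

Lemma ballA_nb r w x : e w x -> ballA r x \subset ballA r.+1 w.
Proof. by move=> ewx; apply: subset_trans (subsetUr _ _); apply: bigcup_sup. Qed.

Lemma ballA_within r w v : v \in ballA r w <-> within_dist e r w v.
Proof.
split.
  elim: r w => [|r IH] w /=.
    by rewrite inE => /eqP ->; exists [::].
  rewrite inE => /orP [/IH [p [pp lp sp]]|/bigcupP [x ewx /IH [p [pp lp sp]]]].
    by exists p; split => //; apply: leq_trans sp _.
  by exists (x :: p); split => //=; rewrite ?ewx.
elim: r w => [|r IH] w [p [pp lp sp]].
  by case: p pp lp sp => //= _ <- _; rewrite inE.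
case: p pp lp sp => [|x p] /=.
  by move=> _ <- _; exact: (ballA_self r.+1 w).
move=> /andP [ewx pp] lp sp.
apply: (subsetP (ballA_nb r ewx)); apply: IH; by exists p.
Qed.

Lemma within_step r w x v : within_dist e r w x -> e x v -> within_dist e r.+1 w v.
Proof.
move=> [p [pp lp sp]] exv; exists (rcons p v); split.
- by rewrite rcons_path pp lp.
- by rewrite last_rcons.
- by rewrite size_rcons.
Qed.

Lemma within_last r w v : within_dist e r.+1 w v ->
  within_dist e r w v \/ exists x, within_dist e r w x /\ e x v.
Proof.
move=> [p [pp lp sp]]; case/lastP: p pp lp sp => [|p z].
  by move=> _ /= <- _; left; exists [::].
rewrite rcons_path last_rcons size_rcons ltnS => /andP [pp ez] <- sp.
by right; exists (last w p); split => //; exists p.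
Qed.

Definition sph (r : nat) (w : 'I_n) : {set 'I_n} :=
  if r is r'.+1 then ballA r w :\: ballA r' w else [set w].

Lemma sph_sub r w : sph r.+1 w \subset \bigcup_(x in sph r w) [set y | e x y].
Proof.
apply/subsetP=> v; rewrite [sph r.+1 w]/sph in_setD => /andP [nv].
move/ballA_within=> /within_last [/ballA_within|[x [/ballA_within xb exv]]].
  by rewrite (negbTE nv).
apply/bigcupP; exists x; last by rewrite inE.
case: r nv xb => [|r] nv xb; first by [].
rewrite /sph in_setD xb andbT; apply/negP=> xr; move/ballA_within: xr => xr.
by move/negP: nv; apply; apply/ballA_within; exact: within_step xr exv.
Qed.

Lemma card_bigcup_le (I : finType) (S : {pred I}) (F : I -> {set 'I_n}) :
  #|\bigcup_(x in S) F x| <= \sum_(x in S) #|F x|.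
Proof.
elim/big_rec2: _ => [|i U k _ IH]; first by rewrite cards0.
by apply: leq_trans (leq_card_setU _ _) _; rewrite leq_add2l.
Qed.

Variable D : nat.
Hypothesis degD : forall x, #|[set y | e x y]| <= D.

Lemma card_sph r w : #|sph r w| <= D ^ r.
Proof.
elim: r => [|r IH]; first by rewrite cards1.
apply: leq_trans (subset_leq_card (sph_sub r w)) _.
apply: leq_trans (card_bigcup_le _ _) _.
apply: leq_trans (_ : \sum_(x in sph r w) D <= _).
  by apply: leq_sum => x _; apply: degD.
rewrite sum_nat_const expnS mulnC; apply: leq_mul => //; exact: leq_trans (IH) (leqnn _).
Qed.

Lemma card_ballA_sum r w : #|ballA r w| <= \sum_(i < r.+1) #|sph i w|.
Proof.
elim: r => [|r IH]; first by rewrite big_ord_recr big_ord0.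
rewrite big_ord_recr.
have sub : ballA r.+1 w \subset ballA r w :|: sph r.+1 w.
  apply/subsetP=> v vb; rewrite inE; case E: (v \in ballA r w) => //=.
  by move: vb; rewrite /sph in_setD E.  
apply: leq_trans (subset_leq_card sub) _.
by apply: leq_trans (leq_card_setU _ _) _; rewrite leq_add2r.
Qed.

Lemma sum_pow_le r : 1 < D -> \sum_(i < r.+1) D ^ i <= 2 * D ^ r.
Proof.
move=> D2; elim: r => [|r IH]; first by rewrite big_ord_recr big_ord0.
rewrite big_ord_recr /= expnS.
apply: leq_trans (leq_add IH (leqnn _)) _.
have : 2 * D ^ r <= D * D ^ r by rewrite leq_mul2r D2 orbT.
lia.
Qed.

Hypothesis esym : symmetric e.

Lemma sph2_empty w : D <= 1 -> sph 2 w = set0.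
Proof.
move=> D1; apply/eqP; rewrite -subset0; apply/subsetP => v vs; exfalso.
have := subsetP (sph_sub 1 w) v vs => /bigcupP [x xs].
rewrite inE => exv.
move: xs; rewrite /sph in_setD => /andP [xnw xb1].
have ewx : e w x.
  move/ballA_within: xb1 => /within_last [/ballA_within|[x0 [/ballA_within]]].
    by rewrite (negbTE xnw).
  by rewrite inE => /eqP ->.
have c1 : #|[set y | e x y]| <= 1 := leq_trans (degD x) D1.
have vw : v = w.
  case: (boolP (v == w)) => [/eqP //|vnw].
  have : 1 < #|[set y | e x y]|.
    rewrite (cardsD1 v) inE exv ltnS card_gt0; apply/set0Pn; exists w.
    by rewrite !inE eq_sym vnw /= esym.
  by rewrite ltnNge c1.
by move: vs; rewrite /sph in_setD vw (ballA_self 1 w).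
Qed.

Lemma sph_empty i w : D <= 1 -> 1 < i -> sph i w = set0.
Proof.
move=> D1; elim: i => // i IH; rewrite ltnS leq_eqVlt => /orP [/eqP <-|i1].
  exact: sph2_empty.
apply/eqP; rewrite -subset0; apply: subset_trans (sph_sub i w) _.
by rewrite IH // big_set0 sub0set.
Qed.

Lemma sum_le2 (f : nat -> nat) r : (forall i, 1 < i -> f i = 0) -> f 0 <= 1 -> f 1 <= 1 ->
  \sum_(i < r.+1) f i <= 2.
Proof.
move=> H0 h0 h1; elim: r => [|r IH]; first by rewrite big_ord_recr big_ord0 /=; lia.
rewrite big_ord_recr /=; case: r IH => [|r] IH.
  by rewrite big_ord_recr big_ord0 /=; lia.
by rewrite H0 // addn0.
Qed.

Lemma card_ballA r w : 0 < D -> #|ballA r w| <= 2 * D ^ r.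
Proof.
move=> D0; apply: leq_trans (card_ballA_sum r w) _.
case: (ltnP 1 D) => D2.
  apply: leq_trans (sum_pow_le r D2); apply: leq_sum => i _; exact: card_sph.
have -> : D = 1 by lia.
rewrite exp1n muln1.
have s0 : #|sph 0 w| <= 1 by rewrite cards1.
have s1 : #|sph 1 w| <= 1 by have := card_sph 1 w; rewrite expn1; lia.
apply: (@sum_le2 (fun i => #|sph i w|)) => //.
by move=> i i1; rewrite sph_empty // cards0.
Qed.

End Balls.

Definition selprop D W (memb : nat -> nat -> bool) := forall x Y, x < 2^W ->
  all (fun y => y < 2^W) Y -> size Y <= D -> x \notin Y ->
  exists2 j, j < qf D W ^ 2 & memb j x && all (fun y => ~~ memb j y) Y.

Section Alg.
Variable P : params.
Definition Wd := p_c P * (log2 (p_n P)).+1.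
Definition Sn := qf (p_Delta P) Wd ^ 2.
Definition Kn := 4 * p_Delta P ^ p_h P.
Definition wdn := 2 * Wd + 2 * p_B P.
Definition Ln := Kn * wdn.+1.
Definition SLn := Ln.*2.
Definition PLn := Sn * SLn.
Definition NPn := 2 * p_h P.
Definition rnds := if (p_B P == 0) || (p_Delta P == 0) then 0 else NPn * PLn.
Definition memb : nat -> nat -> bool :=
  epsilon (inhabits (fun _ _ => true)) (selprop (p_Delta P) Wd).

Lemma membP : selprop (p_Delta P) Wd memb.
Proof. apply: epsilon_spec; exact: selfam. Qed.

Definition state := (seq (seq nat) * seq item)%type.
Definition initT (i : nat) (inp : input) (bl : seq (seq nat)) : seq item :=
  undup (pmap (fun d => omap (fun m => (i, d, m)) (inp d)) (nth [::] bl (p_h P))).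
Definition upd (i : nat) (inp : input) (p : nat) (st : state) (D : seq item) : state :=
  if p < p_h P then
    let bl' := rcons st.1 (undup (nth [::] st.1 p ++ [seq t.1.1 | t <- D])) in
    (bl', if p.+1 == p_h P then initT i inp bl' else st.2)
  else (st.1, undup [seq t <- st.2 ++ D | t.1.2 \in nth [::] st.1 ((p_h P).*2 - p.+1)]).
Definition items (p : nat) (st : state) : seq item :=
  if p < p_h P then [seq (a, 0, [::]) | a <- nth [::] st.1 p] else st.2.
Definition msgOf (p : nat) (st : state) : seq bool :=
  encList Kn wdn (map (encItem Wd (p_B P)) (items p st)).
Definition slotseg (hs : seq bool) (p j : nat) :=
  take SLn (drop (j * SLn) (take PLn (drop (p * PLn) hs))).
Definition recv (i p : nat) (hs : seq bool) : seq item :=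
  flatten [seq (if memb j i then [::] else
                if demanch Ln (slotseg hs p j) is Some s
                then map (decItem Wd (p_B P)) (decList Kn wdn s) else [::]) | j <- iota 0 Sn].
Fixpoint stA (i : nat) (inp : input) (p : nat) (hs : seq bool) : state :=
  if p is p'.+1 then upd i inp p' (stA i inp p' hs) (recv i p' hs) else ([:: [:: i]], [::]).
Definition actf (i : nat) (inp : input) (hs : seq bool) : bool :=
  let r := size hs in
  if r < rnds then
    let p := r %/ PLn in let o := r %% PLn in
    memb (o %/ SLn) i && man (msgOf p (stA i inp p hs)) (o %% SLn)
  else false.
Definition outf (i : nat) (inp : input) (hs : seq bool) : output :=
  if p_B P == 0 then fun _ => Some [::] else
  fun s => if [seq t <- (stA i inp NPn hs).2 | (t.1.1 == s) && (t.1.2 == i)] is t :: _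
           then Some t.2 else None.

Lemma recv_take i p m hs : (p.+1) * PLn <= m -> recv i p (take m hs) = recv i p hs.
Proof.
move=> le; rewrite /recv /slotseg.
have -> : take PLn (drop (p * PLn) (take m hs)) = take PLn (drop (p * PLn) hs).
  by rewrite !take_drop take_takel // addnC -mulSn.
by [].
Qed.

Lemma stA_take i inp p m hs : p * PLn <= m -> stA i inp p (take m hs) = stA i inp p hs.
Proof.
elim: p => //= p IH le; rewrite recv_take // IH //.
by apply: leq_trans le; rewrite leq_mul2r leqnSn orbT.
Qed.
End Alg.

Definition Alg := Algorithm rnds actf outf.

Section Hist.
Variables (n : nat) (e : rel 'I_n) (A : algorithm) (P : params)
          (id : 'I_n -> nat) (inp : 'I_n -> input).
Let H := hist e A P id inp.
Definition bp r w := act A P (id w) (inp w) (H r w).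

Lemma hist_size r v : size (H r v) = r.
Proof. by elim: r v => //= r IH v; rewrite size_rcons IH. Qed.

Lemma hist_take m r v : m <= r -> take m (H r v) = H m v.
Proof.
elim: r => [|r IH]; first by rewrite leqn0 => /eqP ->.
rewrite leq_eqVlt => /orP [/eqP ->|]; first by rewrite take_oversize // hist_size.
rewrite ltnS => le; rewrite /H /= -cats1 takel_cat; first exact: IH.
by rewrite hist_size.
Qed.

Lemma hist_nth r R v : r < R ->
  nth false (H R v) r = ~~ bp r v && [exists w, e v w && bp r w].
Proof.
move=> lt; rewrite -(nth_take _ (ltnSn r)) hist_take //= nth_rcons hist_size ltnn eqxx.
by [].
Qed.
End Hist.

Section Proof.
Variables (c n : nat) (e : rel 'I_n) (Delta h B : nat) (id : 'I_n -> nat) (inp : 'I_n -> input).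
Hypothesis c1 : 1 <= c.
Hypothesis sg : simple_graph e.
Hypothesis md : max_degree e = Delta.
Hypothesis idinj : injective id.
Hypothesis idb : forall v, 1 <= id v <= n ^ c.
Hypothesis inpb : forall v d m, inp v d = Some m -> size m <= B.
Hypothesis B0 : 0 < B.
Hypothesis D0 : 0 < Delta.
Hypothesis h0 : 0 < h.

Local Notation P := (Params n c Delta h B).
Local Notation H := (hist e Alg P id inp).
Local Notation PL := (PLn P).
Local Notation SL := (SLn P).

Definition G p w := stA P (id w) (inp w) p (H (p * PL) w).

Lemma rndsE : rnds P = NPn P * PL.
Proof. by rewrite /rnds /= !eqn0Ngt B0 D0. Qed.

Lemma Kpos : 0 < Kn P.
Proof. by rewrite /Kn /= muln_gt0 expn_gt0 D0. Qed.

Lemma SLpos : 0 < SL.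
Proof. by rewrite /SL /SLn double_gt0 /Ln muln_gt0 Kpos. Qed.

Lemma Spos : 0 < Sn P.
Proof. by rewrite /Sn expn_gt0 /qf expn_gt0. Qed.

Lemma Lpos : 0 < Ln P.
Proof. by rewrite /Ln muln_gt0 Kpos. Qed.

Lemma PLpos : 0 < PL.
Proof. by rewrite /PL /PLn muln_gt0 Spos SLpos. Qed.

Lemma deg x : #|[set y | e x y]| <= Delta.
Proof. rewrite -md; exact: (@leq_bigmax _ (fun v => degree e v) x). Qed.

Lemma id_lt v : id v < 2 ^ Wd P.
Proof.
have /andP [_ le] := idb v; apply: leq_ltn_trans le _.
rewrite /Wd /= mulnC expnM; case: c c1 => // c' _.
rewrite ltn_exp2r //; exact: trunc_log_ltn.
Qed.

Lemma bp_eval p j pos w : p < NPn P -> j < Sn P -> pos < SL ->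
  bp e Alg P id inp (p * PL + j * SL + pos) w =
  memb P j (id w) && man (msgOf P p (G p w)) pos.
Proof.
move=> pN jS posS.
have inP : j * SL + pos < PL.
  rewrite /PL /PLn -/SL; apply: leq_trans (_ : j.+1 * SL <= _); first by rewrite mulSn addnC ltn_add2r.
  by rewrite leq_mul2r jS orbT.
rewrite /bp /= /actf hist_size rndsE.
have -> : p * PL + j * SL + pos < NPn P * PL.
  rewrite -addnA; apply: leq_trans (_ : p.+1 * PL <= _); first by rewrite mulSn addnC ltn_add2r.
  by rewrite leq_mul2r pN orbT.
rewrite -addnA divnMDl ?PLpos // (divn_small inP) addn0.
rewrite modnMDl (modn_small inP) divnMDl ?SLpos // (divn_small posS) addn0 modnMDl (modn_small posS).
by rewrite -(stA_take _ _ _ (m := p * PL)) ?hist_take // leq_addr.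
Qed.

Lemma G_succ p v : G p.+1 v =
  upd P (id v) (inp v) p (G p v) (recv P (id v) p (H (p.+1 * PL) v)).
Proof.
rewrite /G /=; congr upd.
by rewrite -(stA_take _ _ _ (m := p * PL)) ?hist_take // leq_mul2r leqnSn orbT.
Qed.

Lemma slot_nth p j i v : j < Sn P -> i < SL ->
  nth false (slotseg P (H (p.+1 * PL) v) p j) i = nth false (H (p.+1 * PL) v) (p * PL + j * SL + i).
Proof.
move=> jS iS; have inP : j * SL + i < PL.
  rewrite /PL /PLn -/SL; apply: leq_trans (_ : j.+1 * SL <= _); first by rewrite mulSn addnC ltn_add2r.
  by rewrite leq_mul2r jS orbT.
by rewrite /slotseg nth_take // nth_drop nth_take // nth_drop addnA.
Qed.

Lemma slot_size p j v : j < Sn P -> size (slotseg P (H (p.+1 * PL) v) p j) = SL.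
Proof.
move=> jS; rewrite /slotseg.
have e1 : size (drop (p * PL) (H (p.+1 * PL) v)) = PL by rewrite size_drop hist_size mulSn addnK.
have e2 : size (take PL (drop (p * PL) (H (p.+1 * PL) v))) = PL by rewrite size_takel // size_drop hist_size mulSn addnK.
have le : j.+1 * SL <= PL by rewrite /PL /PLn -/SL leq_mul2r jS orbT.
rewrite size_takel // size_drop e2; move: le; rewrite mulSn; lia.
Qed.

Lemma slot_heard p j i v : p < NPn P -> j < Sn P -> i < SL -> ~~ memb P j (id v) ->
  nth false (slotseg P (H (p.+1 * PL) v) p j) i =
  [exists w, (e v w && memb P j (id w)) && man (msgOf P p (G p w)) i].
Proof.
move=> pN jS iS nm; rewrite slot_nth // hist_nth; last first.
  rewrite -addnA mulSn addnC ltn_add2r.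
  rewrite /PL /PLn -/SL; apply: leq_trans (_ : j.+1 * SL <= _); first by rewrite mulSn addnC ltn_add2r.
  by rewrite leq_mul2r jS orbT.
rewrite bp_eval // (negbTE nm) /=; apply: eq_existsb => w.
by rewrite -andbA; congr (_ && _); exact: (bp_eval w pN jS iS).
Qed.

Definition WFp p := forall w, size (items P p (G p w)) <= Kn P /\
  all (wfi (Wd P) B) (items P p (G p w)).

Lemma msg_size p st : size (msgOf P p st) = Ln P.
Proof. by rewrite /msgOf size_encList. Qed.

Lemma msg_dec p st : size (items P p st) <= Kn P -> all (wfi (Wd P) B) (items P p st) ->
  map (decItem (Wd P) B) (decList (Kn P) (wdn P) (msgOf P p st)) = items P p st.
Proof.
move=> sz wf; rewrite /msgOf encListK ?size_map //; last first.
  by apply/allP=> x /mapP [t _ ->]; rewrite size_encItem.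
rewrite -map_comp; rewrite -[RHS]map_id; apply/eq_in_map => t tin /=.
by apply: encItemK; move/allP: wf; apply.
Qed.

Lemma recv_sound p v t : p < NPn P -> WFp p ->
  t \in recv P (id v) p (H (p.+1 * PL) v) -> exists2 w, e v w & t \in items P p (G p w).
Proof.
move=> pN wf /flatten_mapP [j]; rewrite mem_iota add0n => /= jS.
case: ifP => // nm; case E: demanch => [s|] // tin.
have [w /andP [evw _] Ms] := dec_sound (tr := fun w => e v w && memb P j (id w))
  (M := fun w => msgOf P p (G p w)) (L := Ln P) (g := slotseg P (H (p.+1 * PL) v) p j)
  (fun w _ => msg_size p (G p w)) (fun i iL => slot_heard pN jS iL (negbT nm)) Lpos E.
exists w => //; move: tin; rewrite -Ms msg_dec //; by case: (wf w).
Qed.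


Lemma recv_complete p v w t : p < NPn P -> WFp p -> e v w ->
  t \in items P p (G p w) -> t \in recv P (id v) p (H (p.+1 * PL) v).
Proof.
move=> pN wf evw tin.
have vw : v != w by apply/eqP=> vw; move: evw; rewrite vw; case: sg => _ ->.
pose Y := id v :: [seq id y | y <- enum ([set y | e v y] :\ w)].
have Y1 : all (fun y => y < 2 ^ Wd P) Y.
  by rewrite /= id_lt; apply/allP=> a /mapP [y _ ->]; rewrite id_lt.
have Y2 : size Y <= p_Delta P.
  rewrite /= size_map -cardE; have := deg v; rewrite (cardsD1 w) inE evw /=. done.
have Y3 : id w \notin Y.
  rewrite /Y in_cons negb_or; apply/andP; split.
    by apply/eqP=> /idinj /eqP; rewrite eq_sym (negbTE vw).
  by apply/mapP=> [[y]]; rewrite mem_enum !inE => /andP [yw _] /idinj /eqP; rewrite eq_sym (negbTE yw).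
have [j jS /andP [mw /allP mY]] := membP (id_lt w) Y1 Y2 Y3.
have mv : memb P j (id v) = false by apply/negbTE/mY; rewrite mem_head.
apply/flatten_mapP; exists j; first by rewrite mem_iota add0n.
rewrite mv.
rewrite (dec_complete (tr := fun w => e v w && memb P j (id w))
  (M := fun w => msgOf P p (G p w)) (L := Ln P) (g := slotseg P (H (p.+1 * PL) v) p j)
  (fun w _ => msg_size p (G p w)) (fun i iL => slot_heard pN jS iL (negbT mv)) (w0 := w)); last 2 first.
- by rewrite evw mw.
- move=> y /andP [evy my]; apply/eqP; apply/negPn/negP => yw.
  have : ~~ memb P j (id y) by apply: mY; rewrite in_cons; apply/orP; right; apply/mapP; exists y => //; rewrite mem_enum !inE yw evy.
  by rewrite my.
rewrite msg_dec //; by case: (wf w).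
Qed.


Definition img r w : seq nat := [seq id x | x in ballA e r w].

Definition SND t w (tau : item) :=
  (exists s, [/\ s \in ballA e t w, tau.1.1 = id s & inp s tau.1.2 = Some tau.2]) /\
  (exists2 d, d \in ballA e (h - t) w & tau.1.2 = id d).

Definition Inv p := forall w,
  [/\ size (G p w).1 = (minn p h).+1,
      forall r, r <= minn p h -> uniq (nth [::] (G p w).1 r) /\ nth [::] (G p w).1 r =i img r w
    & h <= p -> uniq (G p w).2 /\ forall t, t \in (G p w).2 -> SND (p - h) w t].

Lemma degD x : #|[set y | e x y]| <= Delta.
Proof. exact: deg. Qed.

Lemma ball_card r w : #|ballA e r w| <= 2 * Delta ^ r.
Proof. by apply: card_ballA => //; [exact: degD | case: sg]. Qed.

Lemma Inv_WF p : p < NPn P -> Inv p -> WFp p.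
Proof.
move=> pN inv w; have [I1 I2 I3] := inv w.
rewrite /items /=; case: ltnP => ph.
  have pm : p <= minn p h by rewrite leq_min leqnn ltnW.
  have [u2 m2] := I2 p pm.
  split.
    rewrite size_map; apply: leq_trans (uniq_leq_size u2 (_ : {subset _ <= img p w})) _.
      by move=> a; rewrite m2.
    rewrite size_image; apply: leq_trans (ball_card p w) _.
    have := @leq_pexp2l Delta p h D0 (ltnW ph); rewrite /Kn /=; lia.
  apply/allP=> t /mapP [a ain ->]; rewrite /wfi /= expn_gt0 /= andbT.
  by move: ain; rewrite m2 => /mapP [x _ ->]; rewrite id_lt.
have [u3 s3] := I3 ph.
have tlt : p - h <= h by rewrite /NPn /= in pN; lia.
split.
  pose f (sd : 'I_n * 'I_n) : item := (id sd.1, id sd.2, odflt [::] (inp sd.1 (id sd.2))).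
  apply: leq_trans (uniq_leq_size u3 (_ : {subset _ <= image f (setX (ballA e (p - h) w) (ballA e (h - (p - h)) w))})) _.
    move=> t tin; have [[s [sb e1 e2]] [d db e3]] := s3 t tin.
    apply/imageP; exists (s, d); first by rewrite inE sb db.
    by case: t e1 e2 e3 {tin} => [[a b] m] /= E1 E2 E3; rewrite E3 in E2; rewrite E1 E3 /f /= E2.
  rewrite size_image cardsX.
  apply: leq_trans (leq_mul (ball_card _ w) (ball_card _ w)) _.
  rewrite /Kn /= mulnACA -expnD subnKC //.
apply/allP=> t tin; have [[s [sb e1 e2]] [d db e3]] := s3 t tin.
by rewrite /wfi e1 e3 !id_lt /=; apply: inpb e2.
Qed.


Lemma Inv0 : Inv 0.
Proof.
move=> w; rewrite /G /=; split.
- by rewrite min0n.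
- move=> r; rewrite min0n leqn0 => /eqP -> /=; split => // a.
  rewrite inE /img; apply/eqP/mapP => [->|[x]]; first by exists w; rewrite ?mem_enum /= ?inE.
  by rewrite mem_enum /= inE => /eqP ->.
- by rewrite leqNgt h0.
Qed.

Lemma ballA_sub r w : ballA e r w \subset ballA e r.+1 w.
Proof. exact: ballA_mono. Qed.

Lemma Inv_step p : p < NPn P -> Inv p -> Inv p.+1.
Proof.
move=> pN inv; have wf := Inv_WF pN inv.
move=> w; have [I1 I2 I3] := inv w.
rewrite G_succ /upd /=.
set D := recv P (id w) p (H (p.+1 * PL) w).
case: ltnP => ph.
  have mph : minn p.+1 h = p.+1 by apply/minn_idPl.
  have mp : minn p h = p by apply/minn_idPl; apply: ltnW.
  rewrite mp in I1 I2.
  have newP : forall a, (a \in undup (nth [::] (G p w).1 p ++ [seq t.1.1 | t <- D])) = (a \in img p.+1 w).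
    move=> a; rewrite mem_undup mem_cat.
    apply/orP/mapP => [[|/mapP [t tD ->]]|[x]].
    - have [_ m2] := I2 p (leqnn _); rewrite m2 => /mapP [x xb ->].
      by exists x => //; rewrite mem_enum; apply: (subsetP (ballA_sub p w)); rewrite mem_enum in xb.
    - have [y ewy] := recv_sound pN wf tD.
      rewrite /items /= ph => /mapP [a' a'in ->] /=.
      have [_ _ _] := inv y.
      have [_ I2y _] := inv y; rewrite mp in I2y; have [_ m2y] := I2y p (leqnn _).
      move: a'in; rewrite m2y => /mapP [x xb ->]; exists x => //.
      rewrite mem_enum; rewrite mem_enum in xb; apply: (subsetP (ballA_nb _ ewy)) xb.
    - rewrite mem_enum /= inE => /orP [xb ->|/bigcupP [y ewy xb] ->].
        by left; have [_ m2] := I2 p (leqnn _); rewrite m2; apply/mapP; exists x; rewrite ?mem_enum.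
      right; apply/mapP; exists (id x, 0, [::]) => //.
      apply: (recv_complete pN wf ewy).
      rewrite /items ph /=; apply/mapP; exists (id x) => //.
      have [_ I2y _] := inv y; rewrite mp in I2y; have [_ m2y] := I2y p (leqnn _).
      by rewrite m2y; apply/mapP; exists x; rewrite ?mem_enum.
  split.
  - by rewrite size_rcons I1 mph.
  - move=> r; rewrite mph leq_eqVlt => /orP [/eqP ->|rp].
      by rewrite nth_rcons I1 ltnn eqxx undup_uniq.
    by rewrite nth_rcons I1 rp; apply: I2.
  - move=> hp; have hE : h = p.+1 by apply/eqP; rewrite eqn_leq hp ph.
    rewrite hE eqxx subnn; split; first exact: undup_uniq.
    move=> t; rewrite mem_undup mem_pmap => /mapP [d dIn].
    move: dIn; rewrite nth_rcons I1 ltnn eqxx newP => /mapP [x xb dE]; subst d.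
    case E: (inp w (id x)) => [m|] //= [->] /=.
    split; first by exists w; split => //; rewrite ?(ballA_self) //.
    by exists x => //; rewrite subn0 hE; rewrite mem_enum in xb.
have mph : minn p.+1 h = h by apply/minn_idPr; apply: leqW.
have mp : minn p h = h by apply/minn_idPr.
rewrite mp in I1 I2; have [u3 s3] := I3 ph.
split.
- by rewrite mph.
- by rewrite mph.
- move=> _; split; first exact: undup_uniq.
  move=> t; rewrite mem_undup mem_filter => /andP [tl].
  have lev : h.*2 - p.+1 <= h by lia.
  have [_ m2] := I2 _ lev; move: tl; rewrite m2 => /mapP [d db dE].
  have lvl : h.*2 - p.+1 = h - (p.+1 - h) by lia.
  move=> tin; rewrite /SND; split; last by exists d => //; rewrite -lvl; rewrite mem_enum in db.
  have tE : p.+1 - h = (p - h).+1 by lia.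
  move: tin; rewrite mem_cat => /orP [/s3 [[s [sb e1 e2]] _]|tD].
    by exists s; split => //; rewrite tE; apply: (subsetP (ballA_sub _ w)).
  have [y ewy] := recv_sound pN wf tD.
  rewrite /items /= ltnNge ph /= => ty.
  have [_ _ I3y] := inv y; have [_ s3y] := I3y ph; have [[s [sb e1 e2]] _] := s3y t ty.
  by exists s; split => //; rewrite tE; apply: (subsetP (ballA_nb _ ewy)).
Qed.


Lemma InvAll p : p <= NPn P -> Inv p.
Proof.
elim: p => [|p IH] pN; first exact: Inv0.
by apply: Inv_step; [exact: pN | apply: IH; exact: ltnW].
Qed.

Lemma G_h w : (G h w).2 = initT P (id w) (inp w) (G h w).1.
Proof.
have := G_succ h.-1 w; rewrite prednK // /upd /=.
have hl : h.-1 < h by rewrite prednK.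
rewrite hl prednK // eqxx => ->; by [].
Qed.

Fixpoint reach (u v0 : 'I_n) (t : nat) (w : 'I_n) : Prop :=
  if t is t'.+1 then v0 \in ballA e (h - t) w /\ (reach u v0 t' w \/ exists2 x, e w x & reach u v0 t' x)
  else w = u /\ v0 \in ballA e h u.

Lemma comp u v0 m : inp u (id v0) = Some m -> forall t w, t <= h -> reach u v0 t w ->
  (id u, id v0, m) \in (G (h + t) w).2.
Proof.
move=> um; elim=> [|t IH] w th /=.
  move=> [-> vb]; rewrite addn0 G_h /initT mem_undup mem_pmap.
  apply/mapP; exists (id v0); last by rewrite /= um.
  have hN : h <= NPn P by rewrite /NPn /=; lia.
  have [_ I2 _] := InvAll hN u.
  have hm : h <= minn h h by rewrite minnn.
  have [_ ->] := I2 h hm.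
  by apply/mapP; exists v0; rewrite ?mem_enum.
move=> [vb rr].
have pN : h + t < NPn P by rewrite /NPn /=; lia.
have inv := InvAll (ltnW pN); have wf := Inv_WF pN inv.
rewrite addnS G_succ /upd /= ltnNge leq_addr /= mem_undup mem_filter; apply/andP; split.
  have [_ I2 _] := inv w.
  have lev : h.*2 - (h + t).+1 <= minn (h + t) h by rewrite (minn_idPr (leq_addr _ _)); lia.
  have [_ ->] := I2 _ lev.
  have -> : h.*2 - (h + t).+1 = h - t.+1 by lia.
  by apply/mapP; exists v0; rewrite ?mem_enum.
rewrite mem_cat; case: rr => [rw|[x ewx rx]].
  by rewrite IH // ltnW.
apply/orP; right; apply: (recv_complete pN wf ewx).
by rewrite /items ltnNge leq_addr /=; apply: IH => //; exact: ltnW.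
Qed.


Lemma reach_path u v0 p : forall x t, path e x p -> last x p = v0 -> t + size p <= h ->
  reach u v0 t x -> reach u v0 (t + size p) v0.
Proof.
elim: p => [|y p IH] x t /=.
  by move=> _ <- _; rewrite addn0.
move=> /andP [exy pp] lp sz rx.
rewrite -addSnnS; apply: IH => //; try lia.
by rewrite lp.
split.
  apply/ballA_within; exists p; split => //; lia.
by right; exists x => //; case: sg => esym _; rewrite esym.
Qed.

Lemma reach_ext u v0 t : reach u v0 t v0 -> forall k, t + k <= h -> reach u v0 (t + k) v0.
Proof.
move=> r0; elim=> [|k IH] le; first by rewrite addn0.
by rewrite addnS /=; split; [exact: ballA_self | left; apply: IH; lia].
Qed.

Lemma correct u v0 m : within_dist e h u v0 -> inp u (id v0) = Some m ->
  final_output e Alg P id inp v0 (id u) = Some m.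
Proof.
move=> wd um.
have r0 : reach u v0 0 u by split => //; apply/ballA_within.
have [p [pp lp sp]] := wd.
have rp := reach_path (t := 0) pp lp sp r0; rewrite add0n in rp.
have rH : reach u v0 h v0.
  have := reach_ext rp (k := h - size p); rewrite subnKC //; apply; exact: leqnn.
have tin := comp um (leqnn h) rH.
rewrite /final_output /= /outf /= (negbTE (lt0n_neq0 B0)) rndsE.
have -> : NPn P = h + h by rewrite /NPn /= addnn mul2n.
rewrite -/(G (h + h) v0).
set l := [seq t <- _ | _].
have : (id u, id v0, m) \in l by rewrite mem_filter !eqxx tin.
case El : l => [|t l'] //= _.
have : t \in l by rewrite El mem_head.
rewrite mem_filter => /andP [/andP [/eqP t1 /eqP t2] ttr].
have hN : h + h <= NPn P by rewrite /NPn /= addnn mul2n.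
have [_ _ I3] := InvAll hN v0; have [_ s3] := I3 (leq_addr _ _).
have [[s [_ e1 e2]] _] := s3 t ttr.
have su : s = u by apply: idinj; rewrite -e1 t1.
by rewrite su t2 um in e2; case: e2 => ->.
Qed.

End Proof.

Lemma bound_arith (c n Delta h B : nat) : 1 <= c -> 0 < B -> 0 < Delta ->
  rnds (Params n c Delta h B) <= 320 * c ^ 3 * (h * B * Delta ^ (h + 2) * (log2 n).+1 ^ 3).
Proof.
move=> c1 B0 D0.
rewrite /rnds /= !eqn0Ngt B0 D0 /=.
rewrite /NPn /PLn /Sn /SLn /Ln /wdn /Kn /Wd /=.
set X := (log2 n).+1.
set W := c * X.
set a := Delta ^ h.
have W1 : 0 < W by rewrite muln_gt0 c1.
have hq : qf Delta W <= 2 * Delta * W.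
  rewrite /qf expnS -mulnA leq_mul2l /=; apply: trunc_logP => //; by rewrite muln_gt0 D0.
have hq2 : qf Delta W ^ 2 <= (2 * Delta * W) * (2 * Delta * W) by rewrite -mulnn leq_mul.
have hw : (2 * W + 2 * B).+1 <= 5 * W * B by nia.
have E : Delta ^ (h + 2) = a * (Delta * Delta) by rewrite expnD.
rewrite E.
apply: leq_trans (_ : 2 * h * ((2 * Delta * W) * (2 * Delta * W) * (4 * a * (5 * W * B)).*2) <= _).
  rewrite leq_mul2l; apply/orP; right; apply: leq_mul => //.
  by rewrite leq_double leq_mul2l hw orbT.
rewrite /W; nia.
Qed.

Theorem theorem8 :
  exists A : algorithm,
  forall c : nat, 1 <= c ->
  exists (C k : nat),
  forall (n : nat) (e : rel 'I_n) (Delta h B : nat)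
         (id : 'I_n -> nat) (inp : 'I_n -> input),
    simple_graph e ->
    max_degree e = Delta ->
    injective id ->
    (forall v, 1 <= id v <= n ^ c) ->
    (forall v d m, inp v d = Some m -> size m <= B) ->
    let P := Params n c Delta h B in
    rounds A P <= C * (h * B * Delta ^ (h + 2) * (log2 n).+1 ^ k)
    /\
    (forall (u v : 'I_n) (m : msg), u != v -> within_dist e h u v ->
       inp u (id v) = Some m ->
       final_output e A P id inp v (id u) = Some m).
Proof.
exists Alg => c c1; exists (320 * c ^ 3), 3 => n e Delta h B id inp sg md idinj idb inpb.
rewrite [let P := _ in _]/=.
split.
  case: (posnP B) => [B0|B0].
    by rewrite /= /rnds /= B0.
  case: (posnP Delta) => [D0|D0].
    by rewrite /= /rnds /= D0 orbT.
  exact: bound_arith.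
move=> u v m uv wd um.
case: (posnP h) => [h0|h0].
  move: wd => [p [_ lp sp]]; move: sp; rewrite h0 leqn0 size_eq0 => /eqP p0.
  by move: lp uv; rewrite p0 /= => ->; rewrite eqxx.
case: (posnP Delta) => [D0|D0].
  move: wd => [[|x p] [pp lp _]]; first by move: lp uv => /= ->; rewrite eqxx.
  move: pp => /= /andP [eux _].
  have : degree e u <= Delta by rewrite -md; exact: (@leq_bigmax _ (fun v => degree e v) u).
  rewrite D0 leqn0 cards_eq0 => /eqP S0.
  by have := in_set0 x; rewrite -S0 inE eux.
case: (posnP B) => [B0|B0].
  have := inpb _ _ _ um; rewrite B0 leqn0 size_eq0 => /eqP ->.
  by rewrite /final_output /= /outf.
exact: correct.
Qed.
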